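(* Let $\alpha:\mathbb{V}\to\mathbb{U}$ be a morphism between persistence modules of length $n$. Then for all integers $1\le a\le b\le n$, $$\sum_{b'=1}^{n}\sum_{a'=1}^{b'}\mathcal{M}^{\alpha}(a,b,a',b')\ \le\ \dim S^{\mathbb{V}}_{a,b}-\dim S^{\mathbb{V}}_{a-1,b}=\mathcal{D}^{\mathbb{V}}(a,b),$$ and for all integers $1\le a'\le b'\le n$, $$\sum_{b=1}^{n}\sum_{a=1}^{b}\mathcal{M}^{\alpha}(a,b,a',b')\ \le\ \dim S^{\mathbb{U}}_{a',b'}-\dim S^{\mathbb{U}}_{a'-1,b'}=\mathcal{D}^{\mathbb{U}}(a',b').$$
   Context: Fix a field $\mathbf F$; all vector spaces are finite-dimensional over $\mathbf F$. A persistence module $\mathbb{V}$ of length $n$ consists of vector spaces $V_1,\dots,V_n$ and linear maps $f^{\mathbb V}_i:V_i\to V_{i+1}$ ($1\le i\le n-1$). Conventions: $V_i=0$ for every integer $i\le 0$ or $i\ge n+1$, and every map $f^{\mathbb V}_i$ with domain or codomain $0$ is the zero map (in particular $f^{\mathbb V}_0:0\to V_1$ and $f^{\mathbb V}_n:V_n\to 0$). For integers $a\le b$, $f^{\mathbb V}_{a,b}=f^{\mathbb V}_{b-1}\circ\cdots\circ f^{\mathbb V}_a:V_a\to V_b$, with $f^{\mathbb V}_{a,a}=\mathrm{id}$; also $f^{\mathbb V}_b=f^{\mathbb V}_{b,b+1}$. A morphism $\alpha:\mathbb V\to\mathbb U$ of persistence modules of length $n$ is a family of linear maps $\alpha_i:V_i\to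 U_i$ with $\alpha_{i+1}\circ f^{\mathbb V}_i=f^{\mathbb U}_i\circ\alpha_i$ for all $i$ (with $\alpha_i=0$ for $i$ outside $[1,n]$). For a subspace $A\subseteq U_i$, $\alpha_i^{-1}(A)$ denotes the preimage, so $\alpha_i^{-1}(0)=\ker\alpha_i$. For integers $a,b$ define $S^{\mathbb V}_{a,b}=f^{\mathbb V}_{a,b}(V_a)\cap\ker f^{\mathbb V}_b$ if $1\le a\le b\le n$ and $S^{\mathbb V}_{a,b}=0$ otherwise, and $\mathcal D^{\mathbb V}(a,b)=\dim S^{\mathbb V}_{a,b}-\dim S^{\mathbb V}_{a-1,b}$ (the multiplicity of the interval $[a,b]$ in the barcode of $\mathbb V$). For a morphism $\alpha:\mathbb V\to\mathbb U$ define, for integers $a,b,a',b'$, $$\mathcal X^{\alpha}(a,b,a',b')=\dim\big[S^{\mathbb V}_{a,b}\cap f^{\mathbb V}_{b',b}\big(\alpha_{b'}^{-1}(S^{\mathbb U}_{a',b'})\big)\big]-\dim\big[S^{\mathbb V}_{a,b}\cap f^{\mathbb V}_{b',b}\big(\ker\alpha_{b'}\big)\big]$$ if $b'\le b\le n$, and $\mathcal X^{\alpha}(a,b,a',b')=0$ otherwise. Define $$\mathcal M^{\alpha}(a,b,a',b')=\mathcal X^{\alpha}(a,b,a',b')-\mathcal X^{\alpha}(a-1,b,a',b')-\mathcal X^{\alpha}(a,b,a'-1,b')+\mathcal X^{\alpha}(a-1,b,a'-1,b').$$ *)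

(* Defs.v *)
(* Persistence modules modelled inside an ambient
   finite-dimensional vector space W (a vectType over the field F):
   V_i is a subspace of W and f_i a linear map on W restricted to V_i. *)
From HB Require Import structures.
From mathcomp Require Import all_boot all_order all_algebra.
Set Implicit Arguments. Unset Strict Implicit. Unset Printing Implicit Defensive.
Import Order.TTheory GRing.Theory Num.Theory.
Local Open Scope ring_scope.

Record pmod (F : fieldType) (W : vectType F) (n : nat) := PMod {
  pspace : nat -> {vspace W};
  pmap : nat -> 'End(W);
  pspace_out : forall i, (i == 0)%N || (n < i)%N -> pspace i = 0%VS;
  pmap_in : forall i, (pmap i @: pspace i <= pspace i.+1)%VS
}.

Section Defs.
Variables (F : fieldType) (n : nat).

Fixpoint fcomp (W : vectType F) (V : pmod W n) (a k : nat) : 'End(W) :=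
  match k with
  | 0 => \1%VF
  | k'.+1 => (pmap V (a + k') \o fcomp V a k')%VF
  end.

Definition fab (W : vectType F) (V : pmod W n) (a b : nat) : 'End(W) :=
  fcomp V a (b - a).

Definition kerf (W : vectType F) (V : pmod W n) (b : nat) : {vspace W} :=
  (pspace V b :&: lker (pmap V b))%VS.

Definition Ssp (W : vectType F) (V : pmod W n) (a b : nat) : {vspace W} :=
  if [&& (1 <= a)%N, (a <= b)%N & (b <= n)%N]
  then ((fab V a b @: pspace V a) :&: kerf V b)%VS
  else 0%VS.

Definition Dbar (W : vectType F) (V : pmod W n) (a b : nat) : int :=
  (\dim (Ssp V a b))%:Z - (\dim (Ssp V a.-1 b))%:Z.

Definition is_pmorph (W W' : vectType F) (V : pmod W n) (U : pmod W' n)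
    (al : nat -> 'Hom(W, W')) : Prop :=
  (forall i, (al i @: pspace V i <= pspace U i)%VS) /\
  (forall i v, v \in pspace V i ->
     al i.+1 (pmap V i v) = pmap U i (al i v)).

Definition preim (W W' : vectType F) (V : pmod W n)
    (al : nat -> 'Hom(W, W')) (i : nat) (A : {vspace W'}) : {vspace W} :=
  (pspace V i :&: (al i @^-1: A))%VS.

Definition Xal (W W' : vectType F) (V : pmod W n) (U : pmod W' n)
    (al : nat -> 'Hom(W, W')) (a b a' b' : nat) : int :=
  if (b' <= b)%N && (b <= n)%N then
    (\dim (Ssp V a b :&: (fab V b' b @: preim V al b' (Ssp U a' b'))))%:Z
    - (\dim (Ssp V a b :&: (fab V b' b @: preim V al b' 0%VS)))%:Z
  else 0.

Definition Mal (W W' : vectType F) (V : pmod W n) (U : pmod W' n)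
    (al : nat -> 'Hom(W, W')) (a b a' b' : nat) : int :=
  Xal V U al a b a' b' - Xal V U al a.-1 b a' b'
  - Xal V U al a b a'.-1 b' + Xal V U al a.-1 b a'.-1 b'.

End Defs.

(* Main.v *)
Require Import Defs.
From HB Require Import structures.
From mathcomp Require Import all_boot all_order all_algebra.
From mathcomp Require Import zify.
Set Implicit Arguments. Unset Strict Implicit. Unset Printing Implicit Defensive.
Import Order.TTheory GRing.Theory Num.Theory.
Local Open Scope ring_scope.

Section H.
Variable F : fieldType.

Lemma gmono (W : vectType F) (A A' C D : {vspace W}) :
  (A' <= A)%VS -> (C <= D)%VS ->
  (\dim (A :&: C) + \dim (A' :&: D) <= \dim (A :&: D) + \dim (A' :&: C))%N.
Proof.
move=> sA sC.
have e := dimv_sum_cap (A :&: C) (A' :&: D).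
have h1 : (\dim ((A :&: C) + (A' :&: D)) <= \dim (A :&: D))%N.
  apply: dimvS; rewrite subv_add; apply/andP; split.
    by apply: capvS.
  by apply: capvS.
have h2 : (\dim ((A :&: C) :&: (A' :&: D)) <= \dim (A' :&: C))%N.
  apply: dimvS; rewrite subv_cap; apply/andP; split.
    by apply: subv_trans (capvSr _ _) (capvSl _ _).
  by apply: subv_trans (capvSl _ _) (capvSr _ _).
lia.
Qed.

Lemma img_cap_preim (W W' : vectType F) (f : 'Hom(W, W')) U X :
  (f @: (U :&: f @^-1: X) = (f @: U) :&: X)%VS.
Proof.
apply/eqP; rewrite eqEsubv; apply/andP; split.
  apply/subvP=> w /memv_imgP [u /memv_capP [uU uX] ->].
  rewrite memv_cap memv_img //= memv_preim //.
apply/subvP=> w /memv_capP [/memv_imgP [u uU ->] fuX].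
by apply: memv_img; rewrite memv_cap uU -memv_preim.
Qed.

Variable n : nat.

Lemma fcompS (W : vectType F) (V : pmod W n) a k :
  fcomp V a k.+1 = (fcomp V a.+1 k \o Defs.pmap V a)%VF.
Proof.
elim: k => [|k IH]; first by rewrite /= addn0 comp_lfun1r comp_lfun1l.
have E : forall b m, fcomp V b m.+1 = (Defs.pmap V (b+m) \o fcomp V b m)%VF by [].
by rewrite E IH comp_lfunA E addSnnS.
Qed.

Lemma fcomp_pres (W : vectType F) (V : pmod W n) a k :
  (fcomp V a k @: pspace V a <= pspace V (a + k))%VS.
Proof.
elim: k => [|k IH] /=; first by rewrite addn0 lim1g subvv.
rewrite limg_comp addnS; apply: subv_trans (Defs.pmap_in _ _).
exact: limgS.
Qed.

Section H2.
Variables (W : vectType F) (V : pmod W n).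

Lemma fab_id b : fab V b b = \1%VF.
Proof. by rewrite /fab subnn. Qed.

Lemma fab_step b' b : (b' < b)%N -> fab V b' b = (fab V b'.+1 b \o Defs.pmap V b')%VF.
Proof. by move=> h; rewrite /fab -(subnSK h) fcompS. Qed.

Lemma fab_next b' b : (b' <= b)%N -> fab V b' b.+1 = (Defs.pmap V b \o fab V b' b)%VF.
Proof. by move=> h; rewrite /fab (subSn h) /= subnKC. Qed.

Lemma fab_pres b' b : (b' <= b)%N -> (fab V b' b @: pspace V b' <= pspace V b)%VS.
Proof. by move=> h; have := fcomp_pres V b' (b - b'); rewrite subnKC. Qed.

Lemma Ssp0 b : Ssp V 0 b = 0%VS.
Proof. by []. Qed.

Lemma Ssp_ker m : (Ssp V m m <= lker (Defs.pmap V m))%VS.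
Proof.
rewrite /Ssp; case: ifP => _; last exact: sub0v.
by apply: subv_trans (capvSr _ _) _; rewrite /kerf capvSr.
Qed.

Lemma Ssp_mono a b : (1 <= a)%N -> (a <= b)%N -> (Ssp V a.-1 b <= Ssp V a b)%VS.
Proof.
case: a => [//|[|a]] _ hab; first by rewrite Ssp0 sub0v.
rewrite /Ssp /=; case: (b <= n)%N; rewrite ?andbT ?andbF ?sub0v // hab.
rewrite (ltnW hab); apply: capvS; last exact: subvv.
rewrite (fab_step hab) limg_comp; apply: limgS; exact: Defs.pmap_in.
Qed.

End H2.
Section H3.
Variables (W W' : vectType F) (V : pmod W n) (U : pmod W' n) (al : nat -> 'Hom(W, W')).
Hypothesis mor : is_pmorph V U al.

Lemma preim_mono i A B : (A <= B)%VS -> (Defs.preim V al i A <= Defs.preim V al i B)%VS.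
Proof. by move=> h; apply: capvS (subvv _) (lpreimS _ h). Qed.

Lemma KP_sub m b A : (fab V m b @: Defs.preim V al m 0 <= fab V m b @: Defs.preim V al m A)%VS.
Proof. by apply: limgS; apply: preim_mono; apply: sub0v. Qed.

Lemma PK_sub m b : (m < b)%N ->
  (fab V m b @: Defs.preim V al m (Ssp U m m) <= fab V m.+1 b @: Defs.preim V al m.+1 0%VS)%VS.
Proof.
move=> h; rewrite (fab_step V h) limg_comp; apply: limgS.
apply/subvP=> w /memv_imgP [v /memv_capP [vV]]; rewrite -memv_preim => aS ->.
rewrite memv_cap -memv_preim memv0; apply/andP; split.
  by apply: (subvP (Defs.pmap_in V m)); apply: memv_img.
case: mor => _ ->//.
have := subvP (Ssp_ker U m) _ aS; rewrite memv_ker.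
by [].
Qed.

Lemma preim_bound b' S S' : (S' <= S)%VS ->
  (\dim (Defs.preim V al b' S) + \dim S' <= \dim (Defs.preim V al b' S') + \dim S)%N.
Proof.
move=> sS.
have key X : \dim (Defs.preim V al b' X) =
   (\dim (pspace V b' :&: lker (al b')) + \dim (al b' @: pspace V b' :&: X))%N.
  rewrite -img_cap_preim -(limg_ker_dim (al b') (Defs.preim V al b' X)).
  congr (_ + _)%N; congr (\dim _); apply/vspaceP => v.
  rewrite /Defs.preim !memv_cap -memv_preim memv_ker.
  case: (v \in pspace V b') => //=.
  by case: eqP => [-> |]; rewrite ?mem0v ?andbF ?andbT.
rewrite !key.
have := gmono sS (subvf (al b' @: pspace V b')%VS).
rewrite !capvf ![(_ :&: (al b' @: _))%VS]capvC.
lia.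
Qed.

End H3.
Section H4.
Variables (W : vectType F) (V : pmod W n).

Lemma kercount (E : {vspace W}) b' b : (E <= pspace V b')%VS -> (b' <= b)%N ->
  (1 <= b)%N -> (b <= n)%N ->
  (\dim (Ssp V b b :&: (fab V b' b @: E)) + \dim (E :&: lker (fab V b' b))
   = \dim (E :&: lker (fab V b' b.+1)))%N.
Proof.
move=> sE h1 h2 h3.
have e1 : (Ssp V b b :&: (fab V b' b @: E) = fab V b' b @: (E :&: lker (fab V b' b.+1)))%VS.
  rewrite (fab_next V h1).
  apply/vspaceP => w; rewrite /Ssp h2 leqnn h3 /= fab_id lim1g /kerf memv_cap.
  apply/idP/idP.
    case/andP => /memv_capP [wV /memv_capP [_ wk]] /memv_imgP [u uE ew].
    rewrite ew; apply: memv_img; rewrite memv_cap uE /= memv_ker comp_lfunE -memv_ker.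
    by rewrite -ew.
  case/memv_imgP => u /memv_capP [uE]; rewrite memv_ker comp_lfunE -memv_ker => hk ->.
  have fV : fab V b' b u \in pspace V b.
    exact: (subvP (fab_pres V h1) _ (memv_img _ (subvP sE _ uE))).
  by rewrite !memv_cap fV hk memv_img.
have e2 : (E :&: lker (fab V b' b.+1) :&: lker (fab V b' b) = E :&: lker (fab V b' b))%VS.
  apply/vspaceP => v; rewrite !memv_cap !memv_ker (fab_next V h1) comp_lfunE.
  by case: (fab V b' b v =P 0) => [->|]; rewrite ?linear0 ?eqxx ?andbT ?andbF.
rewrite e1; have := limg_ker_dim (fab V b' b) (E :&: lker (fab V b' b.+1)).
rewrite e2; lia.
Qed.

End H4.
Section H5.
Variables (W W' : vectType F) (V : pmod W n) (U : pmod W' n) (al : nat -> 'Hom(W, W')).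
Hypothesis mor : is_pmorph V U al.

Lemma preim_sub i A : (Defs.preim V al i A <= pspace V i)%VS.
Proof. exact: capvSl. Qed.

Lemma Xal_a'0 a b b' : Xal V U al a b 0 b' = 0.
Proof.
rewrite /Xal; case: ifP => // _.
by have -> : Ssp U 0 b' = 0%VS by []; rewrite subrr.
Qed.

Lemma Xal_a0 b a' b' : Xal V U al 0 b a' b' = 0.
Proof.
rewrite /Xal; case: ifP => // _.
by have -> : Ssp V 0 b = 0%VS by []; rewrite !cap0v subrr.
Qed.

Lemma inner1 a b b' : \sum_(1 <= a' < b'.+1) Mal V U al a b a' b' =
   Xal V U al a b b' b' - Xal V U al a.-1 b b' b'.
Proof.
rewrite (GRing.telescope_sumr_eq (fun k => Xal V U al a b k.-1 b' - Xal V U al a.-1 b k.-1 b')) //=.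
  by rewrite !Xal_a'0 subr0.
move=> k _; rewrite /Mal /=; lia.
Qed.

Lemma inner2 a' b' b : \sum_(1 <= a < b.+1) Mal V U al a b a' b' =
   Xal V U al b b a' b' - Xal V U al b b a'.-1 b'.
Proof.
rewrite (GRing.telescope_sumr_eq (fun k => Xal V U al k.-1 b a' b' - Xal V U al k.-1 b a'.-1 b')) //=.
  by rewrite !Xal_a0 subr0.
move=> k _; rewrite /Mal /=; lia.
Qed.

End H5.
Section H6.
Variables (W W' : vectType F) (V : pmod W n) (U : pmod W' n) (al : nat -> 'Hom(W, W')).
Hypothesis mor : is_pmorph V U al.

Lemma part1 a b : (1 <= a)%N -> (a <= b)%N -> (b <= n)%N ->
  \sum_(1 <= b' < n.+1) \sum_(1 <= a' < b'.+1) Mal V U al a b a' b' <= Dbar V a b.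
Proof.
move=> h1 h2 h3.
under eq_bigr => b' _ do rewrite inner1.
have sA := Ssp_mono V h1 h2.
pose P m := (fab V m b @: Defs.preim V al m (Ssp U m m))%VS.
pose K m := (fab V m b @: Defs.preim V al m 0%VS)%VS.
pose g C := (\dim (Ssp V a b :&: C))%:Z - (\dim (Ssp V a.-1 b :&: C))%:Z.
have gm C D : (C <= D)%VS -> g C <= g D.
  by move=> h; have := gmono sA h; rewrite /g; lia.
have T m : (m <= b)%N -> Xal V U al a b m m - Xal V U al a.-1 b m m = g (P m) - g (K m).
  by move=> hm; rewrite /Xal hm h3 /= /g /P /K; lia.
have claim : forall m, (m <= b)%N ->
    \sum_(1 <= b' < m.+1) (Xal V U al a b b' b' - Xal V U al a.-1 b b' b') <= g (P m).
  elim=> [|m IH] hm.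
    rewrite big_geq // /g; have := dimvS (capvS sA (subvv (P 0%N))); lia.
  rewrite big_nat_recr //= (T _ hm).
  apply: le_trans (lerD (IH (ltnW hm)) (lexx _)) _.
  have := gm _ _ (PK_sub mor hm); have := gm _ _ (KP_sub V al m.+1 b (Ssp U m.+1 m.+1)).
  rewrite /P /K; lia.
rewrite (big_cat_nat (n:=b.+1)) //=.
rewrite [X in _ + X]big_nat_cond [X in _ + X]big1 ?addr0; last first.
  move=> i /andP[/andP[hi _] _]; rewrite /Xal leqNgt hi /=; exact: subrr.
apply: le_trans (claim b (leqnn b)) _; have := gm (P b) fullv (subvf _).
rewrite /g /Dbar !capvf; lia.
Qed.

Lemma part2 a' b' : (1 <= a')%N -> (a' <= b')%N -> (b' <= n)%N ->
  \sum_(1 <= b < n.+1) \sum_(1 <= a < b.+1) Mal V U al a b a' b' <= Dbar U a' b'.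
Proof.
move=> h1 h2 h3.
under eq_bigr => b _ do rewrite inner2.
have sS := Ssp_mono U h1 h2.
have sE := preim_mono V al b' sS.
pose H m := (\dim (Defs.preim V al b' (Ssp U a' b') :&: lker (fab V b' m)))%:Z
   - (\dim (Defs.preim V al b' (Ssp U a'.-1 b') :&: lker (fab V b' m)))%:Z.
have Zeq b : (b' <= b)%N -> (b <= n)%N ->
    Xal V U al b b a' b' - Xal V U al b b a'.-1 b' = H b.+1 - H b.
  move=> hb hn; have h1b : (1 <= b)%N by apply: leq_trans hb; apply: leq_trans h2.
  have k1 := kercount (preim_sub V al b' (Ssp U a' b')) hb h1b hn.
  have k2 := kercount (preim_sub V al b' (Ssp U a'.-1 b')) hb h1b hn.
  by rewrite /Xal hb hn /= /H; lia.
have claim : forall k, (b' + k <= n.+1)%N ->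
   \sum_(1 <= b < b' + k) (Xal V U al b b a' b' - Xal V U al b b a'.-1 b') = H (b' + k)%N - H b'.
  elim=> [|k IH] hk.
    rewrite addn0 [RHS]subrr big_nat_cond big1 // => i /andP[/andP[_ hi] _].
    by rewrite /Xal leqNgt hi /= subrr.
  rewrite addnS big_nat_recr /=; last by lia.
  rewrite IH; last by lia.
  rewrite Zeq; [|lia|lia].
  lia.
have hb' : (b' <= n.+1)%N by apply: leqW.
have := claim (n.+1 - b')%N; rewrite subnKC // => /(_ (leqnn _)) ->.
have e1 := dimvS (capvS sE (subvv (lker (fab V b' b')))).
have e2 := gmono sE (subvf (lker (fab V b' n.+1))).
have e3 := preim_bound V al b' sS.
rewrite /H /Dbar; rewrite !capvf in e2; lia.
Qed.

End H6.
End H.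

Unset Implicit Arguments. Set Strict Implicit.

Theorem mainTheorem1 (F : fieldType) (n : nat) (W W' : vectType F)
    (V : pmod W n) (U : pmod W' n) (al : nat -> 'Hom(W, W')) :
  is_pmorph V U al ->
  (forall a b : nat, (1 <= a)%N -> (a <= b)%N -> (b <= n)%N ->
     \sum_(1 <= b' < n.+1) \sum_(1 <= a' < b'.+1) Mal V U al a b a' b'
       <= Dbar V a b) /\
  (forall a' b' : nat, (1 <= a')%N -> (a' <= b')%N -> (b' <= n)%N ->
     \sum_(1 <= b < n.+1) \sum_(1 <= a < b.+1) Mal V U al a b a' b'
       <= Dbar U a' b').
Proof.
move=> mor; split.
  by move=> a b; apply: part1.
by move=> a' b'; apply: part2.
Qed.
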